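(* Let $A$ be a $K$-algebra and let $A[y_1;\sigma_1,d_1][y_2;\sigma_2,d_2]$ be an iterated Ore extension such that $\sigma_2(A)\subseteq A$ and $\sigma_2(y_1)=py_1+q$ for some $p\in K^*$ and $q\in A$. Then $\sigma_1\sigma_2(a)=\sigma_2\sigma_1(a)$ for all $a\in A$.
   Context: $K$ is a field, $K^*$ its group of units. For a $K$-algebra $R$, an algebra endomorphism $\sigma$ of $R$ and a $\sigma$-derivation $d$ of $R$ (a $K$-linear map with $d(ab)=\sigma(a)d(b)+d(a)b$), the Ore extension $R[x;\sigma,d]$ is the free left $R$-module with basis $\{x^i\}_{i\ge0}$ with associative multiplication extending that of $R$ and satisfying $xr=\sigma(r)x+d(r)$ for $r\in R$. An iterated Ore extension $A[y_1;\sigma_1,d_1][y_2;\sigma_2,d_2]$ is an Ore extension of $R=A[y_1;\sigma_1,d_1]$, where $\sigma_2,d_2$ are an endomorphism and a $\sigma_2$-derivation of $R$. *)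

(* Defs.v *)
From HB Require Import structures.
From mathcomp Require Import all_boot all_order all_algebra.
Set Implicit Arguments. Unset Strict Implicit. Unset Printing Implicit Defensive.
Import GRing.Theory.
Local Open Scope ring_scope.

Definition alg_hom (K : fieldType) (A B : algType K) (f : A -> B) : Prop :=
  [/\ forall a b, f (a + b) = f a + f b,
      forall (k : K) a, f (k *: a) = k *: f a,
      forall a b, f (a * b) = f a * f b
    & f 1 = 1].

Definition alg_endo (K : fieldType) (A : algType K) (sigma : A -> A) : Prop :=
  alg_hom sigma.

Definition sigma_derivation (K : fieldType) (A : algType K)
    (sigma d : A -> A) : Prop :=
  [/\ forall a b, d (a + b) = d a + d b,
      forall (k : K) a, d (k *: a) = k *: d a
    & forall a b, d (a * b) = sigma a * d b + d a * b].

(* S (together with the embedding iota : R -> S and the element x) is the Ore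
   extension R[x; sigma, d]: iota is an algebra homomorphism ("the
   multiplication extends that of R"), S is a free left R-module with basis
   {x^i}_{i >= 0} (every element is a finite R-combination of the x^i, and
   such combinations are unique), and x r = sigma(r) x + d(r). *)
Definition is_ore_ext (K : fieldType) (R S : algType K) (iota : R -> S)
    (x : S) (sigma d : R -> R) : Prop :=
  [/\ alg_hom iota,
      forall s : S, exists (n : nat) (c : nat -> R),
          s = \sum_(i < n) iota (c i) * x ^+ i,
      forall (n : nat) (c : nat -> R),
          \sum_(i < n) iota (c i) * x ^+ i = 0 -> forall i, (i < n)%N -> c i = 0
    & forall r : R, x * iota r = iota (sigma r) * x + iota (d r)].

(* Main.v *)
Require Import Defs.
From HB Require Import structures.
From mathcomp Require Import all_boot all_order all_algebra.
Import GRing.Theory.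
Local Open Scope ring_scope.

Lemma zmod_rearr (V : zmodType) (x1 x2 x3 x4 : V) :
  (x2 - x4) + (x1 - x3) = (x1 + x2) - (x3 + x4).
Proof. by rewrite opprD addrACA [x2 + x1]addrC [- x4 + - x3]addrC. Qed.

Theorem lemma2p1 (K : fieldType) (A R S : algType K)
    (sigma1 d1 : A -> A) (iota1 : A -> R) (y1 : R)
    (sigma2 d2 : R -> R) (iota2 : R -> S) (y2 : S)
    (hs1 : alg_endo sigma1) (hd1 : sigma_derivation sigma1 d1)
    (hR : is_ore_ext iota1 y1 sigma1 d1)
    (hs2 : alg_endo sigma2) (hd2 : sigma_derivation sigma2 d2)
    (hS : is_ore_ext iota2 y2 sigma2 d2)
    (hA : forall a : A, exists a' : A, sigma2 (iota1 a) = iota1 a')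
    (p : K) (q : A) (hp : p != 0)
    (hy1 : sigma2 y1 = p *: y1 + iota1 q) :
  forall a a' : A, sigma2 (iota1 a) = iota1 a' ->
    iota1 (sigma1 a') = sigma2 (iota1 (sigma1 a)).
Proof.
move=> a a' ha.
have [b hb] := hA (sigma1 a).
have [c hc] := hA (d1 a).
case: hs2 => s2D s2Z s2M s21.
case: hR => [[iD iZ iM i1] _ huniq hcomm].
have i0 : iota1 0 = 0.
  have h := iD 0 0; rewrite addr0 in h.
  by apply: (@addrI _ (iota1 0)); rewrite -h addr0.
have iN : forall x, iota1 (- x) = - iota1 x.
  by move=> x; apply/eqP; rewrite -subr_eq0 opprK -iD addNr i0.
have iB : forall x y, iota1 (x - y) = iota1 x - iota1 y.
  by move=> x y; rewrite iD iN.
have E1 : sigma2 (y1 * iota1 a) =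
   p *: (iota1 (sigma1 a') * y1) + (p *: iota1 (d1 a') + iota1 (q * a')).
  rewrite s2M hy1 ha mulrDl -scalerAl hcomm scalerDr iM; by rewrite addrA.
have E2 : sigma2 (y1 * iota1 a) =
   p *: (iota1 b * y1) + (iota1 (b * q) + iota1 c).
  rewrite hcomm s2D s2M hb hc hy1 mulrDr -scalerAr iM; by rewrite addrA.
pose cf := fun i : nat => if i == 0%N then
   (p *: d1 a' + q * a') - (b * q + c) else p *: sigma1 a' - p *: b.
have H : \sum_(i < 2) iota1 (cf i) * y1 ^+ i = 0.
  rewrite !big_ord_recr big_ord0 /= add0r expr0 expr1 mulr1 /cf /=.
  rewrite !iB !iD !iZ mulrBl -!scalerAl.
  rewrite E1 in E2.
  by rewrite zmod_rearr E2 subrr.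
have := huniq 2%N cf H 1%N isT.
rewrite /cf /= => /eqP; rewrite -scalerBr scaler_eq0 (negbTE hp) /= subr_eq0 => /eqP ->.
by rewrite hb.
Qed.
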